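(* Let $q\ge 2$ and $n\ge 1$ be integers and let $m=n+1$. Under uniform transmission over the $1$-insertion channel with input length $n$, $$\max_{{\boldsymbol y}\in\Sigma_q^{m}} \mathsf{H}^{\mathsf{In}}_{1\text{-}\mathsf{Ins}}({\boldsymbol y}) = \log_2 m,$$ and this maximum is attained only by channel outputs ${\boldsymbol y}$ with exactly $m$ runs.
   Context: $\Sigma_q=\{0,1,\dots,q-1\}$. For sequences ${\boldsymbol x}$ of length $\ell$ and ${\boldsymbol y}$ of length $N\ge \ell$, the embedding number $\omega_{{\boldsymbol x}}({\boldsymbol y})$ is the number of index tuples $1\le i_1<\dots<i_\ell\le N$ with $y_{i_j}=x_j$ for all $j$. The $k$-insertion channel with input length $n$ maps ${\boldsymbol x}\in\Sigma_q^n$ to ${\boldsymbol y}\in\Sigma_q^{n+k}$ with probability $\Pr\{{\boldsymbol y}\mid{\boldsymbol x}\}=\omega_{{\boldsymbol x}}({\boldsymbol y})/\big(\binom{n+k}{k}q^k\big)$ (exactly $k$ symbols are inserted, locations and values chosen uniformly). Under uniform transmission the input $X$ is uniform on $\Sigma_q^n$, and for an output ${\boldsymbol y}$ the input entropy is $\mathsf{H}^{\mathsf{In}}_{k\text{-}\mathsf{Ins}}({\boldsymbol y})=H(X\mid Y={\boldsymbol y})=-\sum_{{\boldsymbol x}}P({\boldsymbol x}\mid{\boldsymbol y})\log_2 P({\boldsymbol x}\mid{\boldsymbol y})$ with $P({\boldsymbol x}\mid {\boldsymbol y})=\Pr\{{\boldsymbol y}\mid{\boldsymbol x}\}/\sum_{{\boldsymbol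 x}'\in\Sigma_q^n}\Pr\{{\boldsymbol y}\mid{\boldsymbol x}'\}$. A run is a maximal block of identical consecutive symbols. *)

(* Defs.v *)
From mathcomp Require Import all_boot all_order all_algebra.
From mathcomp Require Import reals exp.
Set Implicit Arguments. Unset Strict Implicit. Unset Printing Implicit Defensive.
Import Order.TTheory GRing.Theory Num.Theory.
Local Open Scope ring_scope.

(* Sigma_q = 'I_q; sequences of length N are N.-tuple 'I_q. *)

(* An index tuple
   i_1 < ... < i_l is identified with the set S = {i_1,...,i_l} of 'I_N. *)
Definition embnum (q l N : nat) (x : l.-tuple 'I_q) (y : N.-tuple 'I_q) : nat :=
  #|[set S : {set 'I_N} | mask [seq (i \in S) | i <- enum 'I_N] (val y) == val x]|.

Definition ins_prob (R : realType) (q n k : nat)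
    (y : (n + k).-tuple 'I_q) (x : n.-tuple 'I_q) : R :=
  (embnum x y)%:R / ('C(n + k, k) * q ^ k)%:R.

Definition posterior (R : realType) (q n k : nat)
    (y : (n + k).-tuple 'I_q) (x : n.-tuple 'I_q) : R :=
  ins_prob R y x / \sum_(x' : n.-tuple 'I_q) ins_prob R y x'.

Definition log2 (R : realType) (x : R) : R := ln x / ln 2.

Definition input_entropy (R : realType) (q n k : nat)
    (y : (n + k).-tuple 'I_q) : R :=
  \sum_(x : n.-tuple 'I_q)
    (let p := posterior R y x in if p == 0 then 0 else - (p * log2 p)).

Definition runs (T : eqType) (s : seq T) : nat :=
  match s with
  | [::] => 0
  | a :: t => (count (fun p : T * T => p.1 != p.2) (zip (a :: t) t)).+1
  end.

(* Main.v *)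
Require Import Defs.
From mathcomp Require Import all_boot all_order all_algebra.
From mathcomp Require Import reals exp.
From mathcomp Require Import zify ring lra.
Import Order.TTheory GRing.Theory Num.Theory.

Definition del {T : Type} (i : nat) (s : seq T) := take i s ++ drop i.+1 s.

Lemma cnt (N : nat) (S : {set 'I_N}) : count id [seq i \in S | i <- enum 'I_N] = #|S|.
Proof. rewrite count_map cardE /enum_mem size_filter /=. rewrite /enum_mem -size_filter filter_predT size_filter. by apply: eq_count. Qed.

Lemma mask_all (T : Type) a i (s : seq T) : i < a -> mask [seq k != i | k <- iota a (size s)] s = s.
Proof.
elim: s a => [|x s IH] a h //=.
have -> : (a != i) = true by apply/eqP => e; rewrite e ltnn in h.
by rewrite IH // ltnW.
Qed.

Lemma mask_del (T : Type) a i (s : seq T) : a <= i -> mask [seq k != i | k <- iota a (size s)] s = del (i - a) s.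
Proof.
elim: s a => [|x s IH] a h; first by rewrite /del.
rewrite /=. case: (ltnP a i) => hai.
- have -> : (a != i) = true by apply/eqP => e; rewrite e ltnn in hai.
  rewrite IH // /del.
  have -> : i - a = (i - a.+1).+1 by rewrite subnSK.
  by [].
- have e : a = i by apply/eqP; rewrite eqn_leq h hai.
  rewrite e eqxx mask_all // subnn /del /=.
  by rewrite drop0.
Qed.

Lemma mask_setC1 (T : Type) (N : nat) (i : 'I_N) (s : seq T) : size s = N ->
  mask [seq j \in [set~ i] | j <- enum 'I_N] s = del i s.
Proof.
move=> hs.
have -> : [seq j \in [set~ i] | j <- enum 'I_N] = [seq k != val i | k <- iota 0 N].
  rewrite -val_enum_ord -[in RHS]map_comp; apply: eq_map => j /=; by rewrite in_setC1.
have := @mask_del T 0 (val i) s (leq0n _); by rewrite hs subn0.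
Qed.

Lemma size_del (T : Type) i (s : seq T) : i < size s -> size (del i s) = (size s).-1.
Proof.
move=> h; rewrite /del size_cat size_take h size_drop. 
lia.
Qed.

Lemma embnumE q l N (hN : N = l.+1) (x : l.-tuple 'I_q) (y : N.-tuple 'I_q) :
  embnum x y = #|[set i : 'I_N | del i (val y) == val x]|.
Proof.
rewrite /embnum.
set A := [set i : 'I_N | _].
have inj : injective (fun i : 'I_N => [set~ i]).
  move=> i j /= e. have : i \notin [set~ i] by rewrite in_setC1 eqxx.
  by rewrite e in_setC1 negbK => /eqP.
have -> : [set S : {set 'I_N} | mask [seq i \in S | i <- enum 'I_N] (val y) == val x] = (fun i => [set~ i]) @: A.
  apply/setP => S; rewrite inE; apply/eqP/imsetP.
  - move=> hm.
    have hS : #|S| = l.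
      have := congr1 size hm.
      by rewrite size_tuple size_mask ?cnt // size_map size_enum_ord size_tuple.
    have : #|~: S| == 1.
      have h := cardsC S; rewrite card_ord hS in h; apply/eqP; lia.
    case/cards1P => i hi. exists i; last by rewrite -hi setCK.
    by rewrite inE -mask_setC1 ?size_tuple // -hi setCK hm.
  - by case=> i; rewrite inE => /eqP hi ->; rewrite mask_setC1 ?size_tuple.
by rewrite card_imset.
Qed.

Lemma sum_w q l N (hN : N = l.+1) (y : N.-tuple 'I_q) :
  \sum_(x : l.-tuple 'I_q) #|[set i : 'I_N | del i (val y) == val x]| = N.
Proof.
under eq_bigr => x _ do rewrite -sum1_card big_mkcond /=.
rewrite exchange_big /= -[RHS]card_ord -sum1_card. apply: eq_bigr => i _.
have hs : size (del i (val y)) == l.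
  by rewrite size_del ?size_tuple ?hN // -hN.
pose t : l.-tuple 'I_q := Tuple hs.
rewrite (bigD1 t) //= inE eqxx big1 // => x hx. rewrite inE.
case: eqP => // e. exfalso; move/eqP: hx; apply; apply: val_inj => /=. by rewrite -e.
Qed.

Lemma del_eq (T : Type) (x0 : T) k (s : seq T) : k.+1 < size s ->
  nth x0 s k = nth x0 s k.+1 -> del k s = del k.+1 s.
Proof.
by move=> h e; rewrite /del (take_nth x0) ?(ltnW h) // (drop_nth x0 h) -e -cats1 -catA.
Qed.

Lemma del_neq (T : Type) (x0 : T) i j (s : seq T) : i < j -> j < size s ->
  del i s = del j s -> nth x0 s i = nth x0 s i.+1.
Proof.
move=> hij hj e; have := congr1 (fun t => nth x0 t i) e.
rewrite /del !nth_cat !size_take (ltn_trans hij hj) hj ltnn hij subnn nth_drop addn0 nth_take //.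
Qed.

Lemma cnt_runs (T : eqType) (x0 : T) a t :
  (forall k, k < size t -> nth x0 (a::t) k != nth x0 (a::t) k.+1) ->
  count (fun p : T * T => p.1 != p.2) (zip (a::t) t) = size t.
Proof.
elim: t a => [|b t IH] a H //=.
rewrite (H 0 (ltn0Sn _)) /= IH // => k hk; exact: (H k.+1 hk).
Qed.

Lemma runs_full (T : eqType) (x0 : T) (s : seq T) :
  (forall k, k.+1 < size s -> nth x0 s k != nth x0 s k.+1) -> runs s = size s.
Proof. case: s => [|a t] //= H. by rewrite (@cnt_runs T x0). Qed.

Local Open Scope ring_scope.

Lemma posteriorE (R : realType) q n (hq : (0 < q)%N) (y : (n+1).-tuple 'I_q) (x : n.-tuple 'I_q) :
  posterior R y x = (embnum x y)%:R / (n+1)%:R.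
Proof.
have hN : (n + 1 = n.+1)%N by rewrite addn1.
rewrite /posterior /ins_prob -mulr_suml -natr_sum.
under eq_bigr => x' _ do rewrite (embnumE _ _ _ hN).
rewrite (sum_w _ _ _ hN) bin1 expn1 natrM.
have h1 : ((n+1)%:R : R) != 0 by rewrite pnatr_eq0 addn1.
have h2 : (q%:R : R) != 0 by rewrite pnatr_eq0 -lt0n.
field. by rewrite natr1 pnatr_eq0 h2.
Qed.

Lemma entropyE (R : realType) q n (hq : (0 < q)%N) (y : (n+1).-tuple 'I_q) :
  input_entropy R y = log2 ((n+1)%:R : R) -
    \sum_(x : n.-tuple 'I_q) (embnum x y)%:R / (n+1)%:R * log2 ((embnum x y)%:R : R).
Proof.
set M := ((n+1)%:R : R).
have hM : 0 < M by rewrite ltr0n addn1.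
have hN : (n + 1 = n.+1)%N by rewrite addn1.
rewrite /input_entropy.
transitivity (\sum_(x : n.-tuple 'I_q) ((embnum x y)%:R / M * log2 M
    - (embnum x y)%:R / M * log2 ((embnum x y)%:R : R))).
  apply: eq_bigr => x _. rewrite /= posteriorE //. fold M.
  case: (posnP (embnum x y)) => [->|hw]; first by rewrite !mul0r eqxx subrr.
  have hp : (embnum x y)%:R / M != 0.
    by rewrite mulf_neq0 // ?pnatr_eq0 -?lt0n ?invr_eq0 ?gt_eqF.
  rewrite (negbTE hp) /log2 ln_div ?posrE ?ltr0n ?addn1 //.
  ring.
rewrite sumrB.
have -> : \sum_(x : n.-tuple 'I_q) (embnum x y)%:R / M * log2 M = log2 M.
  rewrite -mulr_suml -mulr_suml -natr_sum.
  under eq_bigr => x' _ do rewrite (embnumE _ _ _ hN).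
  by rewrite (sum_w _ _ _ hN) mulfV ?mul1r // gt_eqF.
by [].
Qed.

Theorem theorem7 (R : realType) (q n : nat) (hq : (2 <= q)%N) (hn : (1 <= n)%N) :
  (exists y : (n + 1).-tuple 'I_q, input_entropy R y = log2 ((n + 1)%:R : R)) /\
  (forall y : (n + 1).-tuple 'I_q, input_entropy R y <= log2 ((n + 1)%:R : R)) /\
  (forall y : (n + 1).-tuple 'I_q,
      input_entropy R y = log2 ((n + 1)%:R : R) -> runs (val y) = (n + 1)%N).
Proof.
have hq0 : (0 < q)%N by apply: ltnW.
have hN : (n + 1 = n.+1)%N by rewrite addn1.
set M := ((n+1)%:R : R).
have hM : 0 < M by rewrite ltr0n addn1.
have l2 : 0 < ln (2:R) by apply: ln_gt0; lra.
pose T (y : (n + 1).-tuple 'I_q) (x : n.-tuple 'I_q) :=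
  (embnum x y)%:R / M * log2 ((embnum x y)%:R : R).
have Tge0 : forall y x, 0 <= T y x.
  move=> y x; rewrite /T /log2; case: (posnP (embnum x y)) => [->|hw]; first by rewrite !mul0r.
  apply: mulr_ge0; first by apply: divr_ge0; [apply: ler0n | apply: ltW].
  by apply: divr_ge0; [apply: ln_ge0; rewrite ler1n | apply: ltW].
have Tgt0 : forall y x, (1 < embnum x y)%N -> 0 < T y x.
  move=> y x hw; rewrite /T /log2.
  apply: mulr_gt0; first by apply: divr_gt0; [rewrite ltr0n; apply: ltnW | by []].
  by apply: divr_gt0; [apply: ln_gt0; rewrite ltr1n | by []].
have T0 : forall y x, (embnum x y <= 1)%N -> T y x = 0.
  move=> y x; rewrite /T; case: (embnum x y) => [|[|k]] // _; first by rewrite !mul0r.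
  by rewrite /log2 ln1 mul0r mulr0.
have HE : forall y, input_entropy R y = log2 M - \sum_(x : n.-tuple 'I_q) T y x.
  by move=> y; rewrite (entropyE R q n hq0 y).
pose a0 : 'I_q := Ordinal hq0.
pose a1 : 'I_q := Ordinal hq.
split; [|split].
- pose f k := if odd k then a1 else a0.
  have hs0 : size (mkseq f (n+1)) == (n+1)%N by rewrite size_mkseq.
  have alt : forall i, (i.+1 < n+1)%N -> nth a0 (mkseq f (n+1)) i != nth a0 (mkseq f (n+1)) i.+1.
    move=> i hi; rewrite !nth_mkseq // ?(ltnW hi) // /f /=; by case: (odd i).
  exists (Tuple hs0).
  rewrite HE big1 ?subr0 // => x _; apply: T0; rewrite (embnumE _ _ _ hN).
  apply/card_le1_eqP => i j; rewrite !inE => /eqP hi /eqP hj.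
  case: (ltngtP i j) => h; last by apply: val_inj.
  + have := del_neq _ a0 i j (mkseq f (n+1)) h; rewrite size_mkseq ltn_ord => /(_ isT).
    rewrite hi hj => /(_ erefl) e; exfalso.
    by move: (alt i (leq_ltn_trans h (ltn_ord j))); rewrite e eqxx.
  + have := del_neq _ a0 j i (mkseq f (n+1)) h; rewrite size_mkseq ltn_ord => /(_ isT).
    rewrite hi hj => /(_ erefl) e; exfalso.
    by move: (alt j (leq_ltn_trans h (ltn_ord i))); rewrite e eqxx.
- move=> y; rewrite HE.
  have : 0 <= \sum_(x : n.-tuple 'I_q) T y x by apply: sumr_ge0 => x _; exact: Tge0.
  lra.
- move=> y hE.
  have D0 : \sum_(x : n.-tuple 'I_q) T y x = 0 by rewrite HE in hE; lra.
  have le1 : forall x : n.-tuple 'I_q, (embnum x y <= 1)%N.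
    move=> x; case: leqP => // h; exfalso.
    have : T y x = 0 by apply: (psumr_eq0P (fun x _ => Tge0 y x) D0).
    by move: (Tgt0 y x h) => /gt_eqF/eqP.
  transitivity (size (val y)); last exact: size_tuple.
  apply: (runs_full _ a0) => k hk; apply/negP => /eqP e.
  have hd := del_eq _ a0 k (val y) hk e.
  have hk' : (k.+1 < n + 1)%N by rewrite -(size_tuple y).
  have hs : size (del k (val y)) == n.
    rewrite size_del ?size_tuple ?addn1 //; lia.
  have := le1 (Tuple hs); rewrite (embnumE _ _ _ hN).
  have sub : [set (Ordinal (ltnW hk')) ; Ordinal hk'] \subset
             [set i : 'I_(n+1) | del i (val y) == val (Tuple hs)].
    apply/subsetP => i; rewrite !inE => /orP [] /eqP -> /=; first by [].
    by rewrite -hd.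
  have := subset_leq_card sub; rewrite cards2.
  have ne : Ordinal (ltnW hk') != Ordinal hk' by apply/eqP => /(congr1 val) /=; lia.
  rewrite ne; lia.
Qed.
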